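(* Let $k\ge 7$ be an integer and $r=(\log k)^2/k$ (natural logarithm). For $\delta\in[0,1]$ let $g(\delta)=k\delta(1-\delta)^{k-1}$ and \[ \gamma(\delta)=\frac{g(\delta)^{r}}{\delta^{\delta}(1-\delta)^{1-\delta}} \] (with the convention $0^0=1$). Then $\max_{\delta\in[0,1]}\gamma(\delta)<1$. *)

(* Defs.v *)
From mathcomp Require Import all_boot all_order all_algebra.
From mathcomp Require Import all_classical all_reals all_analysis.
Set Implicit Arguments. Unset Strict Implicit. Unset Printing Implicit Defensive.
Import Order.TTheory GRing.Theory Num.Theory.
Local Open Scope ring_scope.

Definition rk {R : realType} (k : nat) : R := (ln (k%:R : R)) ^+ 2 / k%:R.

Definition gk {R : realType} (k : nat) (d : R) : R :=
  k%:R * d * (1 - d) ^+ (k - 1).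

(* gamma(delta) = g(delta)^r / (delta^delta (1-delta)^(1-delta));
   powR implements the convention 0 `^ 0 = 1 (and 0 `^ x = 0 for x <> 0). *)
Definition gammak {R : realType} (k : nat) (d : R) : R :=
  (gk k d) `^ (rk k) / (d `^ d * (1 - d) `^ (1 - d)).

(* Main.v *)
Require Import Defs.
From mathcomp Require Import all_boot all_order all_algebra.
From mathcomp Require Import all_classical all_reals all_analysis.
From mathcomp Require Import ring lra.
Import Order.TTheory GRing.Theory Num.Theory.
Local Open Scope ring_scope.

Module Aux.
Import numFieldNormedType.Exports.
Set Implicit Arguments. Unset Strict Implicit.
Local Open Scope ring_scope.

Lemma cub0 (R : realFieldType) (x : R) : 1 <= x -> - x^+3 + 219/100 * x^+2 + x - 361/100 < 0.
Proof. move=> h. have hy : 0 <= x - 1 by lra.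
have h2 := mulr_ge0 hy (sqr_ge0 (x - 1 - 66/100)).
nra. Qed.

Lemma cub1 (R : realFieldType) (x : R) : 1 <= x ->
  (361/100 - x)*(x^+2-1) - 2*x^+2*(6/7*(361/100) - 19/10 - 1) - (6/7*(361/100)+1)/7*x^+3 < 0.
Proof. move=> h. have hy : 0 <= x - 1 by lra.
have h2 := mulr_ge0 hy (sqr_ge0 (x - 1 - 1/2)).
nra. Qed.

Definition PP {R : realFieldType} (x L t : R) :=
  (L^+2-x)*(x^+2-1) - 2*x^+2*(L^+2*(1-t)-L-1) - (L^+2*(1-t)+1)*t*x^+3.

Lemma PP0 (R : realFieldType) (x L : R) : 19/10 <= L -> 1 <= x -> PP x L 0 < 0.
Proof.
move=> hL hx; have c := cub0 hx.
have -> : PP x L 0 = (- x^+3 + 219/100 * x^+2 + x - 361/100) +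
   (L - 19/10) * (2*x^+2 - (x^+2+1)*(L+19/10)) by rewrite /PP; field.
have : (L - 19/10) * (2*x^+2 - (x^+2+1)*(L+19/10)) <= 0.
  apply: mulr_ge0_le0; first lra.
  have hx2 : 1 <= x^+2 by nra.
  nra.
lra.
Qed.

Lemma PP1 (R : realFieldType) (x L : R) : 19/10 <= L -> 1 <= x -> PP x L (1/7) < 0.
Proof.
move=> hL hx; have c := cub1 hx.
set a := -(5/7)*x^+2 - 1 - 6/49*x^+3.
have -> : PP x L (1/7) = ((361/100 - x)*(x^+2-1) - 2*x^+2*(6/7*(361/100) - 19/10 - 1) - (6/7*(361/100)+1)/7*x^+3) +
   (L - 19/10) * (a*(L+19/10) + 2*x^+2) by rewrite /PP /a; field.
have : (L - 19/10) * (a*(L+19/10) + 2*x^+2) <= 0.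
  apply: mulr_ge0_le0; first lra.
  have hx2 : 1 <= x^+2 by nra.
  have hx3 : 0 <= x^+3 by rewrite exprS; nra.
  have ha : a <= -(5/7)*x^+2 by rewrite /a; lra.
  have : a * (L + 19/10) <= -(5/7)*x^+2 * (L+19/10) by apply: ler_wpM2r; lra.
  nra.
lra.
Qed.

Lemma PPt (R : realFieldType) (x L t : R) : 19/10 <= L -> 0 <= t <= 1/7 -> 1 <= x -> PP x L t < 0.
Proof.
move=> hL ht hx.
have -> : PP x L t = (1 - 7*t) * PP x L 0 + 7*t * PP x L (1/7) + L^+2 * x^+3 * (t * (t - 1/7))
  by rewrite /PP; field.
have h0 := PP0 hL hx; have h1 := PP1 hL hx.
have e1 : (1 - 7*t) * PP x L 0 <= 0 by apply: mulr_ge0_le0; lra.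
have e2 : 7*t * PP x L (1/7) <= 0 by apply: mulr_ge0_le0; lra.
have e3 : L^+2 * x^+3 * (t * (t - 1/7)) <= 0.
  apply: mulr_ge0_le0; first by rewrite mulr_ge0 // exprn_ge0 //; lra.
  nra.
have : (1 - 7*t) * PP x L 0 + 7*t * PP x L (1/7) < 0.
  case: (ltrP 0 t) => t0.
    have : 7*t * PP x L (1/7) < 0 by nra. lra.
  have -> : t = 0 by lra. rewrite mulr0 subr0 mul1r mul0r addr0 //.
lra.
Qed.

Lemma sLpos (R : realFieldType) (L t : R) : 19/10 <= L -> 0 < t <= 1/7 ->
  L + 1 < L^+2 * (1 - t).
Proof. move=> hL ht. have : 6/7 * L^+2 <= L^+2 * (1 - t) by nra. nra. Qed.

Lemma coreA (R : realFieldType) (L t y a m : R) : 19/10 <= L -> 0 < t <= 1/7 ->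
  0 < y < 1 -> L^+2 * t <= y -> - L <= a -> y + y^+2/2 <= m -> (1 - y) * m <= y - y^+2/2 ->
  L^+2 * t * L + L^+2 * t * a - L^+2 * (1 - t) * m - y * a + (1 - y) * m < 0.
Proof.
move=> hL ht hy hr ha hm1 hm2.
set s := L^+2 * (1 - t).
have hs := sLpos hL ht; rewrite -/s in hs.
have h1 : 0 <= (y - L^+2 * t) * (a + L) by apply: mulr_ge0; lra.
have h2 : 0 <= s * (m - y - y^+2/2) by apply: mulr_ge0; lra.
have h3 : 0 < y * (s - L - 1) by apply: mulr_gt0; lra.
have h4 : 0 <= (s + 1) * y^+2 by apply: mulr_ge0; [lra| exact: sqr_ge0].
nra.
Qed.

Lemma coreB (R : realFieldType) (L t x b m : R) : 19/10 <= L -> 0 < t <= 1/7 ->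
  0 < x -> x < L^+2 -> (x <= 1 -> b <= 0) -> (1 <= x -> b <= (x - x^-1)/2) ->
  x * t + (x * t)^+2/2 <= m -> (1 - x * t) * m <= x * t - (x * t)^+2/2 ->
  L^+2 * t * L + L^+2 * t * (b - L) - L^+2 * (1 - t) * m - x * t * (b - L) + (1 - x * t) * m < 0.
Proof.
move=> hL ht hx0 hxL hb1 hb2 hm1 hm2.
set s := L^+2 * (1 - t).
have hs := sLpos hL ht; rewrite -/s in hs.
set G := (L^+2 - x) * b + x * L - s * x - s * x^+2 * t / 2 + x - x^+2 * t / 2.
have E : L^+2 * t * L + L^+2 * t * (b - L) - s * m - x * t * (b - L) + (1 - x * t) * m
   = t * G - s * (m - x * t - (x * t)^+2/2) + ((1 - x * t) * m - (x * t - (x * t)^+2/2)).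
  by rewrite /G; ring.
rewrite E.
have e1 : 0 <= s * (m - x * t - (x * t)^+2/2) by apply: mulr_ge0; lra.
suff : G < 0.
  move=> hG; have : 0 < t * (- G) by apply: mulr_gt0; lra.
  rewrite mulrN; lra.
have hx2 : 0 <= (s + 1) * x^+2 * t by apply: mulr_ge0; [apply: mulr_ge0; [lra|exact: sqr_ge0]|lra].
have hxs : 0 < x * (s - L - 1) by apply: mulr_gt0; lra.
have hLx : 0 < L^+2 - x by lra.
case: (lerP x 1) => hx1.
  have : (L^+2 - x) * b <= 0 by apply: mulr_ge0_le0; [lra|exact: hb1].
  rewrite /G; nra.
have hx1' : 1 <= x by lra.
have hb := hb2 hx1'.
have e2 : (L^+2 - x) * b <= (L^+2 - x) * ((x - x^-1)/2) by apply: ler_wpM2l; lra.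
have ht' : 0 <= t <= 1/7 by apply/andP; split; lra.
have hP := PPt hL ht' hx1'.
have xw : x * x^-1 = 1 by rewrite mulfV // lt0r_neq0.
set G' := (L^+2 - x) * ((x - x^-1)/2) - x * (s - L - 1) - (s + 1) * t * x^+2 / 2.
have EG : 2 * x * G' = PP x L t by rewrite /G' /PP /s; field; rewrite lt0r_neq0.
have h2x : 0 < 2 * x by lra.
have : G' < 0 by rewrite -(pmulr_rlt0 G' h2x) EG.
rewrite /G /G'; lra.
Qed.
Section L.
Local Open Scope classical_set_scope.
Variable R : realType.

Definition invf (y : R) := y^-1.

Lemma D_inv (z : R) : z != 0 -> is_derive z 1 invf (- z^-2).
Proof.
move=> z0.
have := is_deriveV (f:=id) z0 (is_derive_id z 1).
by rewrite /= scaler1.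
Qed.

Definition f1 : R -> R := (2^-1 : R) *: (id - invf) - (@ln R).

Lemma f1E (z : R) : f1 z = 2^-1 * (z - z^-1) - ln z.
Proof. by []. Qed.

Lemma D1 (z : R) : 0 < z -> is_derive z 1 f1 (2^-1 * (1 + z^-2) - z^-1).
Proof.
move=> z0.
have h1 := is_derive1_ln z0.
have h2 := D_inv (lt0r_neq0 z0).
apply: is_derive_eq.
by rewrite /= opprK.
Qed.

Lemma ln_le_A (y : R) : 1 <= y -> ln y <= 2^-1 * (y - y^-1).
Proof.
move=> y1.
have hd : forall z, z \in `]1, y[%R -> derivable f1 z 1.
  move=> z; rewrite in_itv /= => /andP[z1 _].
  have z0 : 0 < z by exact: lt_trans ltr01 z1.
  by case: (D1 z0).
have hp : forall z, z \in `]1, y[%R -> 0 <= f1^`() z.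
  move=> z; rewrite in_itv /= => /andP[z1 _].
  have z0 : 0 < z by exact: lt_trans ltr01 z1.
  have dd := D1 z0; rewrite derive1E derive_val.
  have zi : 0 < z^-1 by rewrite invr_gt0.
  have -> : z ^- 2 = z^-1 * z^-1 by rewrite expr2 invfM.
  set w := z^-1; have := sqr_ge0 (1 - w); nra.
have hc : {within `[1, y], continuous f1}.
  apply: continuous_in_subspaceT => z; rewrite inE /= in_itv /= => /andP[z1 _].
  have z0 : 0 < z by exact: lt_le_trans ltr01 z1.
  apply: differentiable_continuous; apply/derivable1_diffP.
  by case: (D1 z0).
have := @ger0_derive1_ndecr R f1 1 y hd hp hc 1 y (lexx _) y1 (lexx _).
have -> : f1 1 = 0 by rewrite f1E invr1 subrr mulr0 ln1 subr0.
by rewrite f1E subr_ge0.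
Qed.

Definition sh1 : R -> R := id + cst 1.
Definition f2 : R -> R := (@ln R) + (4 : R) *: (fun z => (sh1 z)^-1).
Lemma f2E (z : R) : f2 z = ln z + 4 * (z + 1)^-1.
Proof. by []. Qed.

Lemma D2 (z : R) : 0 < z -> is_derive z 1 f2 (z^-1 - 4 * (z + 1)^-2).
Proof.
move=> z0.
have h1 := is_derive1_ln z0.
have hs : is_derive z 1 sh1 1.
  by apply: is_derive_eq; rewrite addr0.
have hz : sh1 z != 0 by rewrite /sh1 /= lt0r_neq0 // addr_gt0.
have h2 := is_deriveV hz hs.
apply: is_derive_eq.
by rewrite /= scaler1 scalerN.
Qed.

Lemma ln_ge_B (y : R) : 1 <= y -> 2 * (y - 1) / (y + 1) <= ln y.
Proof.
move=> y1.
have hd : forall z, z \in `]1, y[%R -> derivable f2 z 1.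
  move=> z; rewrite in_itv /= => /andP[z1 _].
  have z0 : 0 < z by exact: lt_trans ltr01 z1.
  by case: (D2 z0).
have hp : forall z, z \in `]1, y[%R -> 0 <= f2^`() z.
  move=> z; rewrite in_itv /= => /andP[z1 _].
  have z0 : 0 < z by exact: lt_trans ltr01 z1.
  have dd := D2 z0; rewrite derive1E derive_val.
  have -> : z^-1 - 4 * (z + 1)^-2 = (z - 1)^+2 / (z * (z + 1)^+2).
    by field; apply/andP; split; rewrite lt0r_neq0 // ?addr_gt0.
  by rewrite divr_ge0 // ?sqr_ge0 // mulr_ge0 // ?sqr_ge0 // ltW.
have hc : {within `[1, y], continuous f2}.
  apply: continuous_in_subspaceT => z; rewrite inE /= in_itv /= => /andP[z1 _].
  have z0 : 0 < z by exact: lt_le_trans ltr01 z1.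
  apply: differentiable_continuous; apply/derivable1_diffP.
  by case: (D2 z0).
have := @ger0_derive1_ndecr R f2 1 y hd hp hc 1 y (lexx _) y1 (lexx _).
rewrite !f2E ln1 add0r.
have y0 : 0 < y + 1 by lra.
move=> h.
have -> : 2 * (y - 1) / (y + 1) = 2 - 4 * (y + 1)^-1 by field; rewrite lt0r_neq0.
have e : 4 / (1 + 1) = 2 :> R by field.
rewrite e in h; lra.
Qed.
End L.
Section M.
Variable R : realType.

Definition Phi (k : nat) (y : R) :=
  rk k * (ln (k%:R : R) + ln y + (k%:R - 1) * ln (1 - y)) - (y * ln y + (1 - y) * ln (1 - y)).

Lemma gammaE (k : nat) (y : R) : (1 <= k)%N -> 0 < y < 1 -> gammak k y = expR (Phi k y).
Proof.
move=> k1 /andP[y0 y1].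
have u0 : 0 < 1 - y by rewrite subr_gt0.
have K0 : 0 < (k%:R : R) by rewrite ltr0n; exact: leq_trans k1.
have X0 : 0 < (1 - y) ^+ (k - 1) by rewrite exprn_gt0.
have g0 : 0 < gk k y by rewrite /gk !mulr_gt0.
rewrite /gammak /powR !gt_eqF //.
rewrite /gk lnM ?posrE ?mulr_gt0 // lnM ?posrE // lnXn // -[ln (1 - y) *+ _]mulr_natr natrB //.
rewrite /Phi -expRD -expRN -expRD; congr expR.
ring.
Qed.


Lemma ln_step (p q : R) : 0 < p -> p <= q -> ln p + 2 * (q - p) / (q + p) <= ln q.
Proof.
move=> p0 pq.
have q0 : 0 < q by exact: lt_le_trans pq.
have Y1 : 1 <= q / p by rewrite ler_pdivlMr // mul1r.
have := ln_ge_B Y1.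
rewrite ln_div ?posrE //.
have -> : 2 * (q / p - 1) / (q / p + 1) = 2 * (q - p) / (q + p).
  by field; apply/andP; split; rewrite lt0r_neq0 // addr_gt0.
lra.
Qed.

Lemma ln7 : 19/10 <= ln (7 : R).
Proof.
have h2 : ln 1 + 2/3 <= ln (2 : R).
  have -> : (2/3 : R) = 2 * (2 - 1) / (2 + 1) by field.
  by apply: ln_step; lra.
have h3 : ln 2 + 2/5 <= ln (3 : R).
  have -> : (2/5 : R) = 2 * (3 - 2) / (3 + 2) by field.
  by apply: ln_step; lra.
have h4 : ln 3 + 2/7 <= ln (4 : R).
  have -> : (2/7 : R) = 2 * (4 - 3) / (4 + 3) by field.
  by apply: ln_step; lra.
have h5 : ln 4 + 2/9 <= ln (5 : R).
  have -> : (2/9 : R) = 2 * (5 - 4) / (5 + 4) by field.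
  by apply: ln_step; lra.
have h6 : ln 5 + 2/11 <= ln (6 : R).
  have -> : (2/11 : R) = 2 * (6 - 5) / (6 + 5) by field.
  by apply: ln_step; lra.
have h7 : ln 6 + 2/13 <= ln (7 : R).
  have -> : (2/13 : R) = 2 * (7 - 6) / (7 + 6) by field.
  by apply: ln_step; lra.
rewrite ln1 in h2.
lra.
Qed.

Lemma Phi_neg (k : nat) (y : R) : (7 <= k)%N -> 0 < y < 1 -> Phi k y < 0.
Proof.
move=> k7 /andP[y0 y1].
set K : R := k%:R.
have K7 : 7 <= K by rewrite /K ler_nat.
have K0 : 0 < K by lra.
have KN : K != 0 by rewrite lt0r_neq0.
set L := ln K.
have hL : 19/10 <= L.
  apply: le_trans ln7 _; rewrite /L ler_ln ?posrE //; lra.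
set t := K^-1.
have t0 : 0 < t by rewrite invr_gt0.
have tK : t * K = 1 by rewrite mulVf.
have ht : 0 < t <= 1/7 by apply/andP; split => //; nra.
have u0 : 0 < 1 - y by lra.
set m := - ln (1 - y).
set Y := (1 - y)^-1.
have Y1 : 1 <= Y by rewrite /Y invf_ge1 //; lra.
have lnY : ln Y = m by rewrite /Y lnV ?posrE.
have YE : Y * (1 - y) = 1 by rewrite mulVf // lt0r_neq0.
have hm1 : y + y^+2/2 <= m.
  have := ln_ge_B Y1; rewrite lnY.
  have -> : 2 * (Y - 1) / (Y + 1) = 2 * y / (2 - y).
    by rewrite /Y; field; apply/andP; split; apply: lt0r_neq0; lra.
  move=> h.
  have h2y : 0 < 2 - y by lra.
  have : 2 * y <= m * (2 - y).
    by rewrite -ler_pdivrMr.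
  nra.
have hm2 : (1 - y) * m <= y - y^+2/2.
  have := ln_le_A Y1; rewrite lnY => h.
  have : (1 - y) * m <= (1 - y) * (2^-1 * (Y - Y^-1)) by apply: ler_wpM2l; lra.
  have -> : (1 - y) * (2^-1 * (Y - Y^-1)) = y - y^+2/2.
    by rewrite /Y invrK; field; rewrite lt0r_neq0.
  done.
have PhiE : Phi k y = L^+2 * t * L + L^+2 * t * ln y - L^+2 * (1 - t) * m - y * ln y + (1 - y) * m.
  by rewrite /Phi /rk -/K -/L /m /t; field.
rewrite PhiE.
case: (lerP (L^+2 * t) y) => hry.
  have ha : - L <= ln y.
    have e1 : ln (L^+2 * t) <= ln y.
      by rewrite ler_ln ?posrE // mulr_gt0 // exprn_gt0 //; lra.
    have p1 : 0 < L^+2 * t by rewrite mulr_gt0 // exprn_gt0 //; lra.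
    have e2 : ln t <= ln (L^+2 * t).
      rewrite ler_ln ?posrE //; nra.
    have e3 : ln t = - L by rewrite /t lnV ?posrE.
    lra.
  have hy01 : 0 < y < 1 by apply/andP; split.
  exact: (coreA hL ht hy01 hry ha hm1 hm2).
set x := y * K.
have x0 : 0 < x by rewrite mulr_gt0.
have hyx : y = x * t by rewrite /x -mulrA [K * t]mulrC tK mulr1.
have hx : x < L^+2.
  have : x < L^+2 * t * K by rewrite /x ltr_pM2r.
  by rewrite -mulrA tK mulr1.
have hln : ln y = ln x - L.
  by rewrite hyx lnM ?posrE // /t lnV ?posrE.
rewrite hln; rewrite hyx in hm1 hm2 *.
apply: coreB => //.
- by move=> x1; apply: ln_le0.
- by move=> x1; have := ln_le_A x1; rewrite mulrC.
Qed.
End M.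

Section C.
Variable R : realType.
Local Open Scope classical_set_scope.

Lemma xlnx_bound (y : R) : 0 < y -> - (y * ln y) < 1.
Proof.
move=> y0; have yi : 0 < y^-1 by rewrite invr_gt0.
have := ln_sublinear yi.
rewrite lnV ?posrE // => h.
have : y * (- ln y) < y * y^-1 by rewrite ltr_pM2l.
by rewrite mulfV ?gt_eqF // mulrN.
Qed.

Lemma rk_gt0 (k : nat) : (2 <= k)%N -> 0 < rk k :> R.
Proof.
move=> k2; have K1 : 1 < (k%:R : R) by rewrite ltr1n.
rewrite /rk divr_gt0 ?exprn_gt0 ?ln_gt0 //; lra.
Qed.

Lemma gamma0 (k : nat) : (2 <= k)%N -> gammak k (0 : R) = 0.
Proof.
move=> k2; rewrite /gammak /gk mulr0 mul0r (@powR0 _ (rk k)) ?mul0r //.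
by apply: lt0r_neq0; exact: rk_gt0.
Qed.

Lemma gamma1 (k : nat) : (2 <= k)%N -> gammak k (1 : R) = 0.
Proof.
move=> k2; rewrite /gammak /gk subrr expr0n /=.
have -> : (k - 1 == 0)%N = false by apply/negbTE; rewrite subn_eq0 -ltnNge.
rewrite mulr0 (@powR0 _ (rk k)) ?mul0r //.
by apply: lt0r_neq0; exact: rk_gt0.
Qed.

Lemma Phi_bound0 (k : nat) (y : R) : (2 <= k)%N -> 0 < y < 1 ->
  Phi k y <= rk k * ln (k%:R) + 2 + rk k * ln y.
Proof.
move=> k2 /andP[y0 y1].
have u0 : 0 < 1 - y by lra.
have r0 : 0 < rk k :> R by exact: rk_gt0.
have h1 := xlnx_bound y0; have h2 := xlnx_bound u0.
have K1 : 1 <= (k%:R : R) by rewrite ler1n; exact: leq_trans k2.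
have l0 : ln (1 - y) <= 0 by apply: ln_le0; lra.
have : 0 <= rk k * ((k%:R - 1) * - ln (1 - y)).
  by apply: mulr_ge0; [lra| apply: mulr_ge0; lra].
rewrite /Phi; lra.
Qed.

Lemma Phi_bound1 (k : nat) (y : R) : (2 <= k)%N -> 0 < y < 1 ->
  Phi k y <= rk k * ln (k%:R) + 2 + rk k * ln (1 - y).
Proof.
move=> k2 /andP[y0 y1].
have u0 : 0 < 1 - y by lra.
have r0 : 0 < rk k :> R by exact: rk_gt0.
have h1 := xlnx_bound y0; have h2 := xlnx_bound u0.
have K1 : 2 <= (k%:R : R) by rewrite ler_nat.
have l0 : ln (1 - y) <= 0 by apply: ln_le0; lra.
have l1 : ln y <= 0 by apply: ln_le0; lra.
have : 0 <= rk k * ((k%:R - 2) * - ln (1 - y)).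
  by apply: mulr_ge0; [lra| apply: mulr_ge0; lra].
have : 0 <= rk k * (- ln y) by apply: mulr_ge0; lra.
rewrite /Phi; lra.
Qed.

End C.

Section D.
Variable R : realType.
Local Open Scope classical_set_scope.

Lemma near01 (z : R) : 0 < z < 1 -> \forall y \near z, 0 < y < 1.
Proof.
move=> /andP[z0 z1]; near=> y; apply/andP; split; near: y.
- exact: lt_nbhsr.
- exact: lt_nbhsl.
Unshelve. all: by end_near.
Qed.

Lemma near01r : \forall y \near (0:R)^'+, 0 < y < 1.
Proof.
near=> y; apply/andP; split; near: y.
- exact: nbhs_right_gt.
- exact: nbhs_right_lt.
Unshelve. all: by end_near.
Qed.

Lemma near01l : \forall y \near (1:R)^'-, 0 < y < 1.
Proof.
near=> y; apply/andP; split; near: y.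
- exact: nbhs_left_gt.
- exact: nbhs_left_lt.
Unshelve. all: by end_near.
Qed.

Lemma Phi_cont (k : nat) (z : R) : 0 < z < 1 -> {for z, continuous (Phi k)}.
Proof.
move=> /andP[z0 z1].
have u0 : 0 < 1 - z by lra.
have c1 : ln y @[y --> z] --> ln z := continuous_ln z0.
have c2 : ln (1 - y) @[y --> z] --> ln (1 - z).
  apply: (@cvg_comp _ _ _ (fun y : R => 1 - y) (@ln R) _ (nbhs (1 - z))); last exact: continuous_ln u0.
  by apply: cvgB; [exact: cvg_cst| exact: cvg_id].
rewrite /Phi.
apply: cvgB.
  apply: cvgMl_tmp; apply: cvgD; first by apply: cvgD; [exact: cvg_cst| exact: c1].
  by apply: cvgMl_tmp.
apply: cvgD; first by apply: cvgM; [exact: cvg_id| exact: c1].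
apply: cvgM; last exact: c2.
by apply: cvgB; [exact: cvg_cst| exact: cvg_id].
Qed.

Lemma gamma_cont (k : nat) : (7 <= k)%N -> {within `[0, 1], continuous (gammak (R:=R) k)}.
Proof.
move=> k7; have k1 : (1 <= k)%N by exact: leq_trans k7.
have k2 : (2 <= k)%N by exact: leq_trans k7.
have r0 : 0 < rk k :> R by exact: rk_gt0.
apply/continuous_within_itvP; first exact: ltr01.
split.
- move=> z; rewrite in_itv /= => hz.
  have cE : (fun y => expR (Phi k y)) @ z --> expR (Phi k z).
    apply: (@cvg_comp _ _ _ (Phi k) expR _ (nbhs (Phi k z))); first exact: Phi_cont.
    exact: continuous_expR.
  have nE : \forall y \near z, expR (Phi k y) = gammak k y.
    by apply: filterS (near01 hz) => y hy; rewrite gammaE.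
  have := cvg_trans (near_eq_cvg nE) cE.
  by rewrite -gammaE //; move=> h; apply: h.
- rewrite gamma0 //.
  set C := expR (rk k * ln (k%:R : R) + 2).
  apply: (@squeeze_cvgr _ _ _ _ (fun=> 0) (fun y => C * y `^ rk k)).
  + apply: filterS near01r => y hy; apply/andP; split.
      rewrite gammaE //; exact: expR_ge0.
    rewrite gammaE // /C /powR gt_eqF; last by case/andP: hy.
    rewrite -expRD ler_expR; exact: Phi_bound0.
  + exact: cvg_cst.
  + have := cvgMl_tmp (a:=C) (powR_cvg0 r0); rewrite mulr0; exact.
- rewrite gamma1 //.
  set C := expR (rk k * ln (k%:R : R) + 2).
  apply: (@squeeze_cvgr _ _ _ _ (fun=> 0) (fun y => C * (1 - y) `^ rk k)).
  + apply: filterS near01l => y hy; apply/andP; split.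
      rewrite gammaE //; exact: expR_ge0.
    rewrite gammaE // /C /powR gt_eqF; last by case/andP: hy => _; rewrite subr_gt0.
    rewrite -expRD ler_expR; exact: Phi_bound1.
  + exact: cvg_cst.
  + have hF : (fun y : R => 1 - y) x @[x --> (1:R)^'-] --> (1 - 1 : R).
      by apply: cvg_at_left_filter; apply: cvgB; [exact: cvg_cst| exact: cvg_id].
    have hG : (fun a => C * a `^ rk k) x @[x --> (1 - 1 : R)^'+] --> 0.
      rewrite subrr; have := cvgMl_tmp (a:=C) (powR_cvg0 r0); rewrite mulr0; exact.
    have hd : {in Interval -oo%O (BRight (1:R)) &, {homo (fun y : R => 1 - y) : x y /~ x < y}}.
      by move=> a b _ _ ab; rewrite ltrD2l ltrN2.
    have hab : (-oo%O < BLeft (1:R))%O by [].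
    exact: (decreasing_cvg_at_left_comp hab hd hF hG).
Qed.
End D.


End Aux.
Import Aux.

Theorem mainTheorem5 (R : realType) (k : nat) (hk : (7 <= k)%N) :
  exists d0 : R, 0 <= d0 <= 1 /\
    (forall d : R, 0 <= d <= 1 -> gammak k d <= gammak k d0) /\
    gammak k d0 < 1.
Proof.
have k2 : (2 <= k)%N by exact: leq_trans hk.
have [c hc hmax] := EVT_max ler01 (gamma_cont (R:=R) hk).
exists c; split; first by move: hc; rewrite in_itv.
split; first by move=> d hd; apply: hmax; rewrite in_itv.
move: hc; rewrite in_itv /= => /andP[c0 c1].
case: (eqVneq c 0) => [->|cn0]; first by rewrite gamma0 // ltr01.
case: (eqVneq c 1) => [->|cn1]; first by rewrite gamma1 // ltr01.
have hc : 0 < c < 1 by apply/andP; split; rewrite lt_neqAle ?c0 ?c1 ?andbT // eq_sym.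
by rewrite gammaE ?expR_lt1 ?Phi_neg //; exact: leq_trans hk.
Qed.
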